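(* Let $\kappa>0$. On $\mathbb{C}^4$ with coordinates $(Z_1,Z_2,W_1,W_2)$ let $\mu_R=|Z_1|^2+|Z_2|^2-|W_1|^2-|W_2|^2-2\sqrt\kappa$ and $\mu_C=Z_1W_1+Z_2W_2$. For $(z_1,z_2)\in\mathbb{C}^2\setminus\{0\}$ and $\psi\in\mathbb{R}$ put $s=|z_1|^2+|z_2|^2$, $F=\sqrt{1+\kappa/s^2}$, $f=\sqrt{1+\kappa/s^2}+\sqrt\kappa/s$, and define the map $$Z_1=z_1e^{i\psi}f^{1/2},\quad Z_2=z_2e^{i\psi}f^{1/2},\quad W_1=-z_2e^{-i\psi}f^{-1/2},\quad W_2=z_1e^{-i\psi}f^{-1/2}.$$ Then its image lies in $\mu_R^{-1}(0)\cap\mu_C^{-1}(0)$, and the pullback of $\frac12\big(|dZ_1|^2+|dZ_2|^2+|dW_1|^2+|dW_2|^2\big)$ equals $$g+sF\big(d\psi+i(A-\bar A)\big)^2,$$ where $g=\frac1s\big(F|z_1dz_2-z_2dz_1|^2+F^{-1}|\bar z_1dz_1+\bar z_2dz_2|^2\big)$ is the Eguchi–Hanson metric and $A=\frac{\sqrt\kappa}{2s^2F}(z_1d\bar z_1+z_2d\bar z_2)$.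
   Context: For a complex $1$-form $\alpha$, $|\alpha|^2$ denotes the symmetric product $\alpha\bar\alpha$; $(\cdot)^2$ of a real $1$-form is its symmetric square. Note $A-\bar A$ is purely imaginary so $i(A-\bar A)$ is a real $1$-form. *)

(* Defs.v *)
From Stdlib Require Import Reals.
From Coquelicot Require Import Coquelicot.
Open Scope R_scope.

Definition ssq (z1 z2 : C) : R := Cmod z1 ^ 2 + Cmod z2 ^ 2.
Definition FF (kappa s : R) : R := sqrt (1 + kappa / s ^ 2).
Definition ff (kappa s : R) : R := sqrt (1 + kappa / s ^ 2) + sqrt kappa / s.
Definition cexpi (psi : R) : C := (cos psi, sin psi).

Definition mapZ1 (kappa : R) (z1 z2 : C) (psi : R) : C :=
  (z1 * cexpi psi * RtoC (sqrt (ff kappa (ssq z1 z2))))%C.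
Definition mapZ2 (kappa : R) (z1 z2 : C) (psi : R) : C :=
  (z2 * cexpi psi * RtoC (sqrt (ff kappa (ssq z1 z2))))%C.
Definition mapW1 (kappa : R) (z1 z2 : C) (psi : R) : C :=
  (- z2 * cexpi (- psi) * RtoC (/ sqrt (ff kappa (ssq z1 z2))))%C.
Definition mapW2 (kappa : R) (z1 z2 : C) (psi : R) : C :=
  (z1 * cexpi (- psi) * RtoC (/ sqrt (ff kappa (ssq z1 z2))))%C.

Definition muR (kappa : R) (Z1 Z2 W1 W2 : C) : R :=
  Cmod Z1 ^ 2 + Cmod Z2 ^ 2 - Cmod W1 ^ 2 - Cmod W2 ^ 2 - 2 * sqrt kappa.
Definition muC (Z1 Z2 W1 W2 : C) : C := (Z1 * W1 + Z2 * W2)%C.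

(* Differential of a C-valued function h of (z1,z2,psi) at (z1,z2,psi),
   evaluated on the tangent vector (w1,w2,chi) (w1 = dz1(v), w2 = dz2(v),
   chi = dpsi(v)): derivative at t = 0 of t |-> h(z1 + t w1, z2 + t w2, psi + t chi),
   componentwise (real and imaginary parts). *)
Definition dmap (h : C -> C -> R -> C) (z1 z2 : C) (psi : R)
    (w1 w2 : C) (chi : R) : C :=
  (Derive (fun t => Re (h (z1 + RtoC t * w1)%C (z2 + RtoC t * w2)%C (psi + t * chi))) 0,
   Derive (fun t => Im (h (z1 + RtoC t * w1)%C (z2 + RtoC t * w2)%C (psi + t * chi))) 0).

Definition EHg (kappa : R) (z1 z2 : C) (w1 w2 : C) : R :=
  let s := ssq z1 z2 in let F := FF kappa s in
  / s * (F * Cmod (z1 * w2 - z2 * w1)%C ^ 2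
         + / F * Cmod (Cconj z1 * w1 + Cconj z2 * w2)%C ^ 2).

Definition formA (kappa : R) (z1 z2 : C) (w1 w2 : C) : C :=
  let s := ssq z1 z2 in let F := FF kappa s in
  (RtoC (sqrt kappa / (2 * s ^ 2 * FF kappa s)) * (z1 * Cconj w1 + z2 * Cconj w2))%C.

(* Main.v *)
Require Import Defs.
From Stdlib Require Import Reals Lra Nsatz.
From Coquelicot Require Import Coquelicot.
Open Scope R_scope.

Lemma Cmod2 (z : C) : Cmod z ^ 2 = fst z ^ 2 + snd z ^ 2.
Proof. unfold Cmod. rewrite pow2_sqrt; [reflexivity|nra]. Qed.

Lemma ssq_pos (z1 z2 : C) : z1 <> 0%C \/ z2 <> 0%C -> 0 < ssq z1 z2.
Proof.
  unfold ssq; intros [H|H].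
  - pose proof (proj1 (Cmod_gt_0 z1) H). pose proof (Cmod_ge_0 z2). nra.
  - pose proof (proj1 (Cmod_gt_0 z2) H). pose proof (Cmod_ge_0 z1). nra.
Qed.

Lemma ssq_lin (z1 z2 w1 w2 : C) t : ssq (z1 + RtoC t * w1)%C (z2 + RtoC t * w2)%C =
  (fst z1 + t * fst w1)^2 + (snd z1 + t * snd w1)^2 + (fst z2 + t * fst w2)^2 + (snd z2 + t * snd w2)^2.
Proof. unfold ssq. rewrite !Cmod2. simpl. ring. Qed.

Lemma is_derive_eq (f : R -> R) x l l' : is_derive f x l -> l = l' -> is_derive f x l'.
Proof. intros H ->; exact H. Qed.

Lemma Hout kappa y : 0 < kappa -> 0 < y ->
  is_derive (fun x => sqrt (ff kappa x)) y
    (sqrt (ff kappa y) * (- sqrt kappa / (2 * y^2 * FF kappa y))).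
Proof.
  intros hk hy. unfold ff, FF.
  assert (HF : 0 < sqrt (1 + kappa / y^2)).
  { apply sqrt_lt_R0. assert (0 < kappa / y^2) by (apply Rdiv_lt_0_compat; nra). lra. }
  assert (HK : 0 < sqrt kappa) by (apply sqrt_lt_R0; lra).
  assert (Hf : 0 < sqrt (1 + kappa / y^2) + sqrt kappa / y).
  { assert (0 < sqrt kappa / y) by (apply Rdiv_lt_0_compat; lra). lra. }
  auto_derive.
  { repeat split; try (apply Rgt_not_eq || apply Rlt_not_eq'); try nra.
    - assert (0 < kappa / y^2) by (apply Rdiv_lt_0_compat; nra). unfold Rdiv in H. simpl in H. lra.
    - unfold Rdiv in Hf. simpl in Hf. lra. }
  assert (Hr : 0 < sqrt (sqrt (1 + kappa / y^2) + sqrt kappa / y)) by (apply sqrt_lt_R0; lra).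
  assert (Hrr : sqrt (sqrt (1 + kappa / y^2) + sqrt kappa / y) * sqrt (sqrt (1 + kappa / y^2) + sqrt kappa / y)
     = sqrt (1 + kappa / y^2) + sqrt kappa / y) by (apply sqrt_sqrt; lra).
  assert (HKK : sqrt kappa * sqrt kappa = kappa) by (apply sqrt_sqrt; lra).
  replace (y * (y * 1)) with (y^2) by ring.
  unfold Rdiv in *.
  set (F := sqrt (1 + kappa * / y^2)) in *.
  set (K := sqrt kappa) in *.
  set (r := sqrt (F + K * / y)) in *.
  rewrite <- HKK.
  replace (r * (- K * / (2 * y^2 * F))) with ((r * r) * (- K * / (2 * y^2 * F)) / r) by (field; split; lra).
  rewrite Hrr. field; repeat split; lra.
Qed.

Lemma G_deriv kappa (z1 z2 w1 w2 : C) : 0 < kappa -> 0 < ssq z1 z2 ->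
  let s := ssq z1 z2 in
  let P := fst z1 * fst w1 + snd z1 * snd w1 + fst z2 * fst w2 + snd z2 * snd w2 in
  is_derive (fun t => sqrt (ff kappa (ssq (z1 + RtoC t * w1)%C (z2 + RtoC t * w2)%C))) 0
    (sqrt (ff kappa s) * (- sqrt kappa * P / (s^2 * FF kappa s))).
Proof.
  intros hk hs s P. assert (hs2 : 0 < s) by exact hs.
  assert (Hs : s = fst z1 ^2 + snd z1 ^2 + fst z2 ^2 + snd z2 ^2).
  { unfold s, ssq. rewrite !Cmod2. ring. }
  set (S := fun t => (fst z1 + t * fst w1)^2 + (snd z1 + t * snd w1)^2 + (fst z2 + t * fst w2)^2 + (snd z2 + t * snd w2)^2).
  apply is_derive_ext with (f := fun t => sqrt (ff kappa (S t))).
  { intro t. unfold S. rewrite ssq_lin. reflexivity. }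
  assert (HS0 : S 0 = s) by (unfold S; rewrite Hs; ring).
  assert (HS : is_derive S 0 (2 * P)).
  { unfold S, P. auto_derive; auto. ring. }
  pose proof (is_derive_comp (fun x => sqrt (ff kappa x)) S 0 _ _ (Hout kappa (S 0) hk ltac:(rewrite HS0; exact hs)) HS) as H.
  rewrite HS0 in H.
  eapply is_derive_eq; [exact H|].
  unfold scal; simpl; unfold mult; simpl.
  assert (0 < FF kappa s).
  { unfold FF. apply sqrt_lt_R0. assert (0 < kappa / s^2) by (apply Rdiv_lt_0_compat; nra). lra. }
  field. split; lra.
Qed.

Definition CD (h : R -> C) (d : C) :=
  is_derive (fun t => fst (h t)) 0 (fst d) /\ is_derive (fun t => snd (h t)) 0 (snd d).


Lemma CD_mult h1 h2 d1 d2 : CD h1 d1 -> CD h2 d2 ->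
  CD (fun t => (h1 t * h2 t)%C) (d1 * h2 0 + h1 0 * d2)%C.
Proof.
  intros [A B] [C D]; split; simpl.
  - eapply is_derive_eq.
    apply (is_derive_minus (fun t => fst (h1 t) * fst (h2 t)) (fun t => snd (h1 t) * snd (h2 t)));
     apply (is_derive_mult (K:=R_AbsRing)); try (first [exact A|exact B|exact C|exact D]); try (intros; apply Rmult_comm).
    unfold minus, plus, opp, mult; simpl. ring.
  - eapply is_derive_eq.
    apply (is_derive_plus (fun t => fst (h1 t) * snd (h2 t)) (fun t => snd (h1 t) * fst (h2 t)));
     apply (is_derive_mult (K:=R_AbsRing)); try (first [exact A|exact B|exact C|exact D]); try (intros; apply Rmult_comm).
    unfold minus, plus, opp, mult; simpl. ring.
Qed.

Lemma CD_lin z w : CD (fun t => (z + RtoC t * w)%C) w.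
Proof.
  split; simpl; auto_derive; auto; ring.
Qed.



Lemma CD_R (g : R -> R) d : is_derive g 0 d -> CD (fun t => RtoC (g t)) (RtoC d).
Proof. intros H; split; simpl; auto. auto_derive; auto. Qed.


Lemma CD_unique h d : CD h d ->
  (Derive (fun t => Re (h t)) 0, Derive (fun t => Im (h t)) 0) = d.
Proof. intros [A B]. destruct d as [d1 d2]. f_equal; apply is_derive_unique; assumption. Qed.

Lemma final (a1 b1 a2 b2 p1 q1 p2 q2 chi K F s t G : R) :
  s = a1^2+b1^2+a2^2+b2^2 -> s * t = 1 -> F * G = 1 -> F^2 = 1 + K^2*t^2 ->
  let l := - K * (a1*p1+b1*q1+a2*p2+b2*q2) * t^2 * G in
  / 2 * ((F + K*t) * ((p1 + l*a1 - chi*b1)^2 + (q1 + l*b1 + chi*a1)^2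
                     + (p2 + l*a2 - chi*b2)^2 + (q2 + l*b2 + chi*a2)^2)
       + (F - K*t) * ((p1 - l*a1 + chi*b1)^2 + (q1 - l*b1 - chi*a1)^2
                     + (p2 - l*a2 + chi*b2)^2 + (q2 - l*b2 - chi*a2)^2))
  = t * (F * ((a1*p2 - b1*q2 - (a2*p1 - b2*q1))^2 + (a1*q2 + b1*p2 - (a2*q1 + b2*p1))^2)
          + G * ((a1*p1 + b1*q1 + a2*p2 + b2*q2)^2 + (a1*q1 - b1*p1 + a2*q2 - b2*p2)^2))
    + s * F * (chi - 2 * (K*t^2*G/2) * (b1*p1 - a1*q1 + b2*p2 - a2*q2))^2.
Proof.
  intros Hs Ht HG HF l. unfold l.
  set (P := a1*p1+b1*q1+a2*p2+b2*q2).
  set (Q := a1*q1 - b1*p1 + a2*q2 - b2*p2).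
  set (W := p1^2+q1^2+p2^2+q2^2).
  transitivity (F*W + F*s*((- K * P * t*t * G)*(- K * P * t*t * G)+chi*chi) + 2*K*t*((- K * P * t*t * G)*P + chi*Q)).
  { subst s P Q W. field. }
  transitivity (t*(F*(s*W - P*P - Q*Q) + G*(P*P+Q*Q)) + s*F*(chi + K*t*t*G*Q)*(chi + K*t*t*G*Q)).
  2: { subst s P Q W. field. }
  assert (HF' : F*F = 1 + K*K*t*t) by (rewrite <- (Rmult_1_r F), <- Rmult_assoc; rewrite ?Rmult_1_r; lra).
  clearbody P Q W. clear l Hs HF. nsatz.
Qed.

Lemma Ceq (x y : C) : fst x = fst y -> snd x = snd y -> x = y.
Proof. destruct x, y; simpl; intros -> ->; reflexivity. Qed.

Lemma CD_d h d d' : CD h d -> d = d' -> CD h d'.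
Proof. intros H ->; exact H. Qed.

Lemma CD_ext h h' d : (forall t, h t = h' t) -> CD h d -> CD h' d.
Proof. intros E [A B]; split; [apply (is_derive_ext (fun t => fst (h t))) | apply (is_derive_ext (fun t => snd (h t)))]; try (intro t; rewrite E; reflexivity); assumption. Qed.

Lemma CD_exp a b : CD (fun t => cexpi (a + t * b)) (Ci * RtoC b * cexpi a)%C.
Proof. unfold cexpi; split; simpl; auto_derive; auto; rewrite Rmult_0_l, Rplus_0_r; ring. Qed.

Lemma CD_mult' h1 h2 d1 d2 v1 v2 : CD h1 d1 -> CD h2 d2 -> h1 0 = v1 -> h2 0 = v2 ->
  CD (fun t => (h1 t * h2 t)%C) (d1 * v2 + v1 * d2)%C.
Proof. intros A B <- <-. apply CD_mult; auto. Qed.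

Lemma CD_Zform (z w : C) psi chi (g : R -> R) r d :
  is_derive g 0 d -> g 0 = r -> r <> 0 ->
  CD (fun t => ((z + RtoC t * w) * cexpi (psi + t*chi) * RtoC (g t))%C)
     (cexpi psi * RtoC r * (w + Ci * RtoC chi * z + RtoC (d/r) * z))%C.
Proof.
  intros Hg Hg0 Hr.
  eapply CD_d.
  - eapply CD_mult'. eapply CD_mult'. apply CD_lin. apply CD_exp.
    reflexivity. reflexivity. apply CD_R, Hg. reflexivity. reflexivity.
  - rewrite Hg0. apply Ceq; simpl; rewrite ?Rmult_0_l, ?Rplus_0_r; field; auto.
Qed.

Lemma CD_Wform (z w : C) psi chi (g : R -> R) r d :
  is_derive g 0 d -> g 0 = r -> r <> 0 ->
  CD (fun t => ((z + RtoC t * w) * cexpi (- (psi + t*chi)) * RtoC (/ g t))%C)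
     (cexpi (- psi) * RtoC (/ r) * (w - Ci * RtoC chi * z - RtoC (d/r) * z))%C.
Proof.
  intros Hg Hg0 Hr.
  assert (Hi : is_derive (fun t => / g t) 0 (- d / g 0 ^ 2)) by (apply is_derive_inv; auto; rewrite Hg0; auto).
  eapply CD_d.
  - eapply CD_mult'. eapply CD_mult'. apply CD_lin.
    eapply CD_ext; [|apply (CD_exp (- psi) (- chi))]. intro t; simpl; f_equal; ring.
    reflexivity. reflexivity. apply CD_R, Hi. reflexivity. reflexivity.
  - rewrite Hg0. apply Ceq; simpl; rewrite ?Rmult_0_l, ?Rplus_0_r; field; auto.
Qed.

Lemma dmap_eq h (z1 z2 : C) psi w1 w2 chi d :
  CD (fun t => h (z1 + RtoC t * w1)%C (z2 + RtoC t * w2)%C (psi + t * chi)) d ->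
  dmap h z1 z2 psi w1 w2 chi = d.
Proof. intro H. unfold dmap. apply (CD_unique _ _ H). Qed.

Lemma Cmod_form a x (u : C) : Cmod (cexpi a * RtoC x * u)%C ^ 2 = x^2 * (fst u ^ 2 + snd u ^ 2).
Proof.
  rewrite !Cmod_mult, Cmod_R.
  assert (Cmod (cexpi a) = 1).
  { unfold Cmod, cexpi; simpl. replace (cos a * (cos a * 1) + sin a * (sin a * 1)) with 1. apply sqrt_1.
    pose proof (sin2_cos2 a). unfold Rsqr in H. lra. }
  rewrite H, <- Cmod2. replace ((1 * Rabs x * Cmod u)^2) with (Rabs x ^2 * Cmod u ^2) by ring.
  rewrite RPow_abs, Rabs_pos_eq by apply pow2_ge_0. reflexivity.
Qed.

Lemma Cmod_form2 a x (z : C) : Cmod (z * cexpi a * RtoC x)%C ^ 2 = x^2 * Cmod z ^ 2.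
Proof.
  rewrite !Cmod_mult, Cmod_R.
  assert (Cmod (cexpi a) = 1).
  { unfold Cmod, cexpi; simpl. replace (cos a * (cos a * 1) + sin a * (sin a * 1)) with 1. apply sqrt_1.
    pose proof (sin2_cos2 a). unfold Rsqr in H. lra. }
  rewrite H. replace ((Cmod z * 1 * Rabs x)^2) with (Rabs x ^2 * Cmod z ^2) by ring.
  rewrite RPow_abs, Rabs_pos_eq by apply pow2_ge_0. reflexivity.
Qed.

Lemma CD_Wform' (z w : C) psi chi (g : R -> R) r d :
  is_derive g 0 d -> g 0 = r -> r <> 0 ->
  CD (fun t => ((- (z + RtoC t * w)) * cexpi (- (psi + t*chi)) * RtoC (/ g t))%C)
     (cexpi (- psi) * RtoC (/ r) * ((- w) - Ci * RtoC chi * (- z) - RtoC (d/r) * (- z)))%C.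
Proof.
  intros Hg Hg0 Hr.
  eapply CD_ext; [|apply (CD_Wform (- z) (- w) psi chi g r d Hg Hg0 Hr)].
  intro t. f_equal. f_equal. apply Ceq; simpl; ring.
Qed.

Theorem mainTheorem4 (kappa : R) (hk : 0 < kappa) (z1 z2 : C) (psi : R)
    (hz : z1 <> 0%C \/ z2 <> 0%C) :
  let Z1 := mapZ1 kappa z1 z2 psi in
  let Z2 := mapZ2 kappa z1 z2 psi in
  let W1 := mapW1 kappa z1 z2 psi in
  let W2 := mapW2 kappa z1 z2 psi in
  muR kappa Z1 Z2 W1 W2 = 0 /\ muC Z1 Z2 W1 W2 = 0%C /\
  forall (w1 w2 : C) (chi : R),
    let s := ssq z1 z2 in
    let F := FF kappa s in
    let A := formA kappa z1 z2 w1 w2 in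
    / 2 * (Cmod (dmap (mapZ1 kappa) z1 z2 psi w1 w2 chi) ^ 2
           + Cmod (dmap (mapZ2 kappa) z1 z2 psi w1 w2 chi) ^ 2
           + Cmod (dmap (mapW1 kappa) z1 z2 psi w1 w2 chi) ^ 2
           + Cmod (dmap (mapW2 kappa) z1 z2 psi w1 w2 chi) ^ 2)
    = EHg kappa z1 z2 w1 w2 + s * F * (chi + Re (Ci * (A - Cconj A))%C) ^ 2.
Proof.
  intros Z1 Z2 W1 W2.
  pose proof (ssq_pos z1 z2 hz) as hs.
  assert (Hs : ssq z1 z2 = fst z1 ^2 + snd z1 ^2 + fst z2 ^2 + snd z2 ^2)
    by (unfold ssq; rewrite !Cmod2; ring).
  set (s := ssq z1 z2) in *.
  assert (HF0 : 0 < FF kappa s).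
  { unfold FF. apply sqrt_lt_R0. assert (0 < kappa / s^2) by (apply Rdiv_lt_0_compat; nra). lra. }
  assert (HF2 : FF kappa s ^ 2 = 1 + kappa / s^2).
  { unfold FF. apply pow2_sqrt. assert (0 < kappa / s^2) by (apply Rdiv_lt_0_compat; nra). lra. }
  assert (HK0 : 0 < sqrt kappa) by (apply sqrt_lt_R0; lra).
  assert (HK2 : sqrt kappa ^ 2 = kappa) by (apply pow2_sqrt; lra).
  assert (Hff : ff kappa s = FF kappa s + sqrt kappa / s) by reflexivity.
  assert (Hf0 : 0 < ff kappa s).
  { rewrite Hff. assert (0 < sqrt kappa / s) by (apply Rdiv_lt_0_compat; lra). lra. }
  assert (Hr0 : 0 < sqrt (ff kappa s)) by (apply sqrt_lt_R0; lra).
  assert (Hr2 : sqrt (ff kappa s) ^ 2 = FF kappa s + sqrt kappa / s) by (rewrite pow2_sqrt; lra).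
  assert (Hir2 : (/ sqrt (ff kappa s)) ^ 2 = FF kappa s - sqrt kappa / s).
  { rewrite pow_inv. rewrite Hr2.
    set (F := FF kappa s) in *. set (K := sqrt kappa) in *.
    assert (F^2 - (K/s)^2 = 1). { rewrite HF2. unfold Rdiv. rewrite <- HK2. field. lra. }
    assert (0 < K/s) by (apply Rdiv_lt_0_compat; lra). assert (0 < F*s) by (apply Rmult_lt_0_compat; lra).
    replace (F - K/s) with ((F^2 - (K/s)^2) / (F + K/s)) by (field; repeat split; lra).
    rewrite H. field. repeat split; lra. }
  set (K := sqrt kappa) in *.
  set (F := FF kappa s) in *.
  set (r := sqrt (ff kappa s)) in *.
  split; [|split].
  - unfold muR, Z1, Z2, W1, W2, mapZ1, mapZ2, mapW1, mapW2. fold s. fold r.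
    assert (Hs' : s = Cmod z1 ^2 + Cmod z2 ^2) by reflexivity.
    rewrite !Cmod_form2, !Cmod_opp, Hr2, Hir2. fold K.
    clearbody r F K s.
    transitivity (2*K/s * (Cmod z1^2 + Cmod z2^2) - 2*K); [field; lra|].
    rewrite <- Hs'. field. lra.
  - unfold muC, Z1, Z2, W1, W2, mapZ1, mapZ2, mapW1, mapW2.
    apply Ceq; simpl; rewrite ?cos_neg, ?sin_neg; ring.
  - intros w1 w2 chi. cbv zeta.
    assert (Hrne : r <> 0) by lra.
    pose proof (G_deriv kappa z1 z2 w1 w2 hk hs) as HG. cbv zeta in HG.
    set (g := fun t => sqrt (ff kappa (ssq (z1 + RtoC t * w1)%C (z2 + RtoC t * w2)%C))).
    assert (Hg0 : g 0 = r).
    { unfold g, r. rewrite ssq_lin. f_equal. f_equal. rewrite Hs. ring. }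
    change (is_derive g 0 (r * (- K * (fst z1 * fst w1 + snd z1 * snd w1 + fst z2 * fst w2 + snd z2 * snd w2) / (s ^ 2 * F)))) in HG.
    rewrite (dmap_eq (mapZ1 kappa) z1 z2 psi w1 w2 chi _ (CD_Zform z1 w1 psi chi g r _ HG Hg0 Hrne)).
    rewrite (dmap_eq (mapZ2 kappa) z1 z2 psi w1 w2 chi _ (CD_Zform z2 w2 psi chi g r _ HG Hg0 Hrne)).
    rewrite (dmap_eq (mapW1 kappa) z1 z2 psi w1 w2 chi _ (CD_Wform' z2 w2 psi chi g r _ HG Hg0 Hrne)).
    rewrite (dmap_eq (mapW2 kappa) z1 z2 psi w1 w2 chi _ (CD_Wform z1 w1 psi chi g r _ HG Hg0 Hrne)).
    rewrite !Cmod_form, Hr2, Hir2.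
    unfold EHg, formA. cbv zeta. fold s. fold F. fold K.
    rewrite !Cmod2.
    cbn [Re Im fst snd Cmult Cplus Cminus Copp Cconj RtoC Ci cexpi].
    rewrite <- HK2 in HF2.
    assert (Hst : s * / s = 1) by (field; lra).
    assert (HFG : F * / F = 1) by (field; lra).
    assert (HF2' : F ^ 2 = 1 + K^2 * (/ s)^2) by (rewrite HF2; field; lra).
    pose proof (final (fst z1) (snd z1) (fst z2) (snd z2) (fst w1) (snd w1) (fst w2) (snd w2) chi K F s (/ s) (/ F) Hs Hst HFG HF2') as Hfin.
    cbv zeta in Hfin.
    match type of Hfin with ?L = ?R => transitivity L; [field; repeat split; lra | rewrite Hfin; field; repeat split; lra] end.
Qed.
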